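(* Let $M\in\mathbb{R}^{n\times n}$ be such that the function $x\mapsto x^TMx$ belongs to the class $\mathcal{Q}$. Define $Z=\sum_{P\in\mathcal{P}} P^TMP$, where $\mathcal{P}$ is the set of all $n\times n$ permutation matrices. Then the function $x\mapsto x^TZx$ also belongs to $\mathcal{Q}$.
   Context: Fix a positive integer $n$. Let $\mathbf{e}\in\mathbb{R}^n$ be the all-ones vector. A square matrix is stochastic if it is entrywise nonnegative and each row sums to $1$. Let $\mathcal{A}\subset\mathbb{R}^{n\times n}$ be the set of stochastic matrices $A=(a_{ij})$ such that: (i) $a_{ii}>0$ for all $i$; (ii) all positive entries in any given row of $A$ are equal; (iii) $a_{ij}>0$ if and only if $a_{ji}>0$; (iv) the graph on $\{1,\dots,n\}$ with edge set $\{(i,j): a_{ij}>0\}$ is connected. The class $\mathcal{Q}$ consists of all functions $Q(x)=x^TMx$ on $\mathbb{R}^n$ where (a) $M$ is nonzero, symmetric and nonnegative definite; (b) $x^TA^TMAx\le x^TMx$ for all $A\in\mathcal{A}$ and $x\in\mathbb{R}^n$; (c) $Q(\mathbf{e})=0$ (equivalently $M\mathbf{e}=0$). For a permutation $\sigma$ of $\{1,\dots,n\}$, the permutation matrix $P_\sigma$ is defined by $(P_\sigma x)_i=x_{\sigma(i)}$; $\mathcal{P}$ is the set of all such matrices. *)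

(* Defs.v *)
From HB Require Import structures.
From mathcomp Require Import all_boot all_order all_algebra all_fingroup.
From mathcomp Require Import reals.
Set Implicit Arguments. Unset Strict Implicit. Unset Printing Implicit Defensive.
Import Order.TTheory GRing.Theory Num.Theory.
Local Open Scope ring_scope.

Section Defs.
Variables (R : realType) (n : nat).

Definition stochastic (A : 'M[R]_n) : Prop :=
  (forall i j, 0 <= A i j) /\ (forall i, \sum_(j < n) A i j = 1).

Definition pos_graph (A : 'M[R]_n) : rel 'I_n := fun i j => 0 < A i j.

Definition in_classA (A : 'M[R]_n) : Prop :=
  [/\ stochastic A,
      (forall i, 0 < A i i),
      (forall i j k, 0 < A i j -> 0 < A i k -> A i j = A i k),
      (forall i j, 0 < A i j <-> 0 < A j i)
    & (forall i j, connect (pos_graph A) i j)].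

Definition qform (M : 'M[R]_n) (x : 'cV[R]_n) : R := (x^T *m M *m x) 0 0.

Definition ones : 'cV[R]_n := const_mx 1.

Definition in_classQ (M : 'M[R]_n) : Prop :=
  [/\ M != 0,
      M^T = M,
      (forall x, 0 <= qform M x),
      (forall A x, in_classA A -> qform M (A *m x) <= qform M x)
    & qform M ones = 0].

End Defs.

(* Main.v *)
Require Import Defs.
From HB Require Import structures.
From mathcomp Require Import all_boot all_order all_algebra all_fingroup.
From mathcomp Require Import reals.
Import Order.TTheory GRing.Theory Num.Theory.
Local Open Scope ring_scope.

Section H.
Variables (R : realType) (n : nat).

Lemma qform_sum (F : {perm 'I_n} -> 'M[R]_n) x :
  qform (\sum_s F s) x = \sum_s qform (F s) x.
Proof. by rewrite /qform mulmx_sumr mulmx_suml summxE. Qed.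

Lemma qform_conj (M : 'M[R]_n) (P : 'M[R]_n) x :
  qform (P^T *m M *m P) x = qform M (P *m x).
Proof. by rewrite /qform trmx_mul !mulmxA. Qed.

Lemma classA_conj (A : 'M[R]_n) (s : {perm 'I_n}) :
  in_classA A -> in_classA (row_perm s (col_perm s A)).
Proof.
have E : forall i j, row_perm s (col_perm s A) i j = A (s i) (s j).
  by move=> i j; rewrite !mxE.
case=> [[h1 h2] h3 h4 h5 h6]; split.
- rewrite /stochastic; split; first by move=> i j; rewrite E.
  move=> i; rewrite -(h2 (s i)) [RHS](reindex_inj (@perm_inj _ s)) /=.
  by apply: eq_bigr => j _; rewrite E.
- by move=> i; rewrite E.
- by move=> i j k; rewrite !E; apply: h4.
- by move=> i j; rewrite !E.
- move=> i j.
  suff K : forall u v, connect (pos_graph A) u v ->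
      connect (pos_graph (row_perm s (col_perm s A))) ((s^-1)%g u) ((s^-1)%g v).
    by have := K (s i) (s j) (h6 _ _); rewrite !permK.
  move=> u v /connectP [p Hp ->] {v}.
  elim: p u Hp => [|w p IH] u /=; first by move=> _; exact: connect0.
  move=> /andP [Huw Hp].
  apply: connect_trans (IH _ Hp).
  apply: connect1; rewrite /pos_graph E !permKV; exact: Huw.
Qed.

Lemma qform_polar (M : 'M[R]_n) : M^T = M -> (forall x, qform M x = 0) -> M = 0.
Proof.
move=> Ms H0.
pose b := fun x y : 'cV[R]_n => (x^T *m M *m y) 0 0.
have bsym : forall x y, b x y = b y x.
  move=> x y; rewrite /b; transitivity (((x^T *m M *m y)^T) 0 0); first by rewrite [RHS]mxE.
  by rewrite !trmx_mul trmxK Ms mulmxA.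
have bD : forall x y, qform M (x + y) = b x x + b x y + b y x + b y y.
  move=> x y; rewrite /qform /b mulmxDr [(x + y)^T]raddfD /= !mulmxDl.
  have addE : forall A B : 'M[R]_1, (A + B) 0 0 = A 0 0 + B 0 0 by move=> *; rewrite mxE.
  rewrite !addE -!addrA; congr (_ + _).
  by rewrite addrA addrCA addrA.
have bdel : forall i j, b (delta_mx i 0) (delta_mx j 0) = M i j.
  by move=> i j; rewrite /b trmx_delta -rowE -colE !mxE.
apply/matrixP => i j; rewrite mxE -bdel.
have := bD (delta_mx i 0) (delta_mx j 0).
rewrite !H0 (bsym (delta_mx j 0)).
have h1 := H0 (delta_mx i 0); have h2 := H0 (delta_mx j 0).
rewrite /qform in h1 h2; rewrite /b h1 h2 add0r addr0 => /esym.
by rewrite -mulr2n -mulr_natr => /eqP; rewrite mulf_eq0 pnatr_eq0 orbF => /eqP.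
Qed.

End H.

Theorem lemma1 (R : realType) (n : nat) (M : 'M[R]_n) :
  in_classQ M ->
  in_classQ (\sum_(s : 'S_n) (perm_mx s)^T *m M *m perm_mx s).
Proof.
case=> hM0 hMs hpos hA hone.
have QZ : forall x, qform (\sum_(s : 'S_n) (perm_mx s)^T *m M *m perm_mx s) x
    = \sum_(s : 'S_n) qform M (perm_mx s *m x).
  by move=> x; rewrite qform_sum; apply: eq_bigr => s _; rewrite qform_conj.
split.
- apply: contra hM0 => /eqP Z0; apply/eqP; apply: qform_polar => // x.
  have : qform (\sum_(s : 'S_n) (perm_mx s)^T *m M *m perm_mx s) x = 0.
    by rewrite Z0 /qform mulmx0 mul0mx mxE.
  rewrite QZ (bigD1 1%g) //= perm_mx1 mul1mx => /eqP.
  rewrite paddr_eq0 ?sumr_ge0 //; first by case/andP => /eqP.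
- rewrite raddf_sum; apply: eq_bigr => s _.
  by rewrite /= !trmx_mul trmxK hMs mulmxA.
- by move=> x; rewrite QZ sumr_ge0.
- move=> A x hA'; rewrite !QZ; apply: ler_sum => s _.
  have -> : perm_mx s *m (A *m x)
      = row_perm s (col_perm s A) *m (perm_mx s *m x).
    rewrite row_permE col_permE -!mulmxA.
    by rewrite (mulmxA (perm_mx s^-1)) -perm_mxM mulVg perm_mx1 mul1mx.
  by apply: hA; apply: classA_conj.
- rewrite QZ big1 // => s _.
  suff -> : perm_mx s *m ones R n = ones R n by [].
  by rewrite -row_permE; apply/matrixP => i j; rewrite !mxE.
Qed.
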